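(* Let $S$ be a UFD and let $F,F'$ be nonzero elements of $S\setminus U(S)$. For $C\in\{0\}\cup U(S)$ write $F-C=F_{C,0}F_{C,1}^{E(C,1)}\cdots F_{C,Q(C)}^{E(C,Q(C))}$ with $F_{C,0}\in U(S)$, integers $1\le E(C,1)\le\dots\le E(C,Q(C))$, and pairwise coprime irreducible $F_{C,1},\dots,F_{C,Q(C)}\in S\setminus U(S)$; let $F'-C=F'_{C,0}F'^{E'(C,1)}_{C,1}\cdots F'^{E'(C,Q'(C))}_{C,Q'(C)}$ be the corresponding factorization of $F'-C$. Assume there is a ring isomorphism $\Delta:S[1/F]\to S[1/F']$ with $\Delta(U(S))=U(S)$. Then (i) $Q(0)=Q'(0)$; and (ii) if $F$ and $F'$ are irreducible in $S$, there exists a bijection $\Theta:U(S)\to U(S)$ such that for all $C\in U(S)$ we have $Q(C)=Q'(\Theta(C))$ and $E(C,i)=E'(\Theta(C),i)$ for $1\le i\le Q(C)$.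
   Context: $U(S)$ denotes the group of units of $S$. *)

(* Defs.v *)
From HB Require Import structures.
From mathcomp Require Import all_boot all_order all_algebra.
From mathcomp Require Import fraction.
Set Implicit Arguments. Unset Strict Implicit. Unset Printing Implicit Defensive.
Import Order.TTheory GRing.Theory Num.Theory.
Local Open Scope ring_scope.

Section Defs.
Variable S : idomainType.

Definition unitS (x : S) : Prop := x \is a GRing.unit.

Definition dvdS (a b : S) : Prop := exists c : S, b = a * c.
Definition assocS (a b : S) : Prop := exists u : S, unitS u /\ b = u * a.
Definition irreducibleS (p : S) : Prop :=
  p != 0 /\ ~ unitS p /\ forall a b : S, p = a * b -> unitS a \/ unitS b.
Definition coprimeS (a b : S) : Prop :=
  forall d : S, dvdS d a -> dvdS d b -> unitS d.

Definition is_UFD : Prop :=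
  (forall x : S, x != 0 -> ~ unitS x ->
     exists ps : seq S, (forall p, p \in ps -> irreducibleS p) /\
                        x = \prod_(p <- ps) p) /\
  (forall ps qs : seq S,
     (forall p, p \in ps -> irreducibleS p) ->
     (forall q, q \in qs -> irreducibleS q) ->
     \prod_(p <- ps) p = \prod_(q <- qs) q ->
     exists qs' : seq S, perm_eq qs qs' /\ size ps = size qs' /\
       forall i, (i < size ps)%N -> assocS (nth 0 ps i) (nth 0 qs' i)).

(* [factorization x es] : x = u * p_1^(e_1) * ... * p_Q^(e_Q) with u a unit,
   p_i pairwise coprime irreducible nonunits, and 1 <= e_1 <= ... <= e_Q,
   where es = [:: e_1; ...; e_Q] (so Q = size es and E(i) = nth 0 es i.-1). *)
Definition factorization (x : S) (es : seq nat) : Prop :=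
  exists (u : S) (ps : seq S),
    unitS u /\ size ps = size es /\
    (forall i, (i < size ps)%N -> irreducibleS (nth 0 ps i)) /\
    (forall i j, (i < size ps)%N -> (j < size ps)%N -> i <> j ->
        coprimeS (nth 0 ps i) (nth 0 ps j)) /\
    (forall i, (i < size es)%N -> (1 <= nth 0%N es i)%N) /\
    sorted leq es /\
    x = u * \prod_(i < size ps) (nth 0 ps i) ^+ (nth 0%N es i).

(* The localization S[1/F], realized as a subring of the fraction field. *)
Definition fracS (x : S) : {fraction S} := @FracField.tofrac S x.
Definition in_loc (F : S) (z : {fraction S}) : Prop :=
  exists (a : S) (n : nat), z = fracS a / (fracS F) ^+ n.

(* Delta is a ring isomorphism S[1/F] -> S[1/F'] (only its restriction to
   S[1/F] matters) mapping the units of S onto the units of S. *)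
Definition loc_ring_iso (F F' : S) (D : {fraction S} -> {fraction S}) : Prop :=
  (forall z, in_loc F z -> in_loc F' (D z)) /\
  (forall z w, in_loc F z -> in_loc F w -> D (z + w) = D z + D w) /\
  (forall z w, in_loc F z -> in_loc F w -> D (z * w) = D z * D w) /\
  D 1 = 1 /\
  (forall z w, in_loc F z -> in_loc F w -> D z = D w -> z = w) /\
  (forall w, in_loc F' w -> exists z, in_loc F z /\ D z = w).

Definition preserves_units (D : {fraction S} -> {fraction S}) : Prop :=
  (forall u : S, unitS u -> exists v : S, unitS v /\ D (fracS u) = fracS v) /\
  (forall v : S, unitS v -> exists u : S, unitS u /\ D (fracS u) = fracS v).

End Defs.

(* Main.v *)
Require Import Defs.
From HB Require Import structures.
From mathcomp Require Import all_boot all_order all_algebra.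
From mathcomp Require Import fraction.
From mathcomp Require Import ring.
From Stdlib Require Import Classical ClassicalEpsilon.
Import Order.TTheory GRing.Theory Num.Theory.
Set Implicit Arguments. Unset Strict Implicit. Unset Printing Implicit Defensive.
Local Open Scope ring_scope.

Section Basics.
Variable S : idomainType.

Lemma dvd_refl (a : S) : dvdS a a.
Proof. by exists 1; rewrite mulr1. Qed.
Lemma dvd_trans (a b c : S) : dvdS a b -> dvdS b c -> dvdS a c.
Proof. by move=> [x ->] [y ->]; exists (x * y); rewrite mulrA. Qed.
Lemma dvd_mulr (a b c : S) : dvdS a b -> dvdS a (b * c).
Proof. by move=> [x ->]; exists (x * c); rewrite mulrA. Qed.
Lemma dvd_mull (a b c : S) : dvdS a c -> dvdS a (b * c).
Proof. by move=> [x ->]; exists (b * x); rewrite mulrCA. Qed.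
Lemma dvd0 (a : S) : dvdS a 0.
Proof. by exists 0; rewrite mulr0. Qed.
Lemma dvd_unit (a u : S) : dvdS a u -> unitS u -> unitS a.
Proof. by move=> [x ->]; rewrite /unitS unitrM => /andP[]. Qed.
Lemma unitS1 : unitS (1 : S). Proof. exact: unitr1. Qed.
Lemma unitSM (a b : S) : unitS a -> unitS b -> unitS (a * b).
Proof. by rewrite /unitS unitrM => -> ->. Qed.
Lemma unitSV (a : S) : unitS a -> unitS (a^-1).
Proof. by rewrite /unitS unitrV. Qed.
Lemma unitSX (a : S) n : unitS a -> unitS (a ^+ n).
Proof. by rewrite /unitS => h; rewrite unitrX. Qed.
Lemma unit_dvd (u a : S) : unitS u -> dvdS u a.
Proof. by move=> hu; exists (u^-1 * a); rewrite mulrA mulrV // mul1r. Qed.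
Lemma dvd_exp (a : S) n : (0 < n)%N -> dvdS a (a ^+ n).
Proof. by case: n => // n _; exists (a ^+ n); rewrite exprS. Qed.
Lemma dvd_expW (a : S) m n : (m <= n)%N -> dvdS (a ^+ m) (a ^+ n).
Proof. by move=> h; exists (a ^+ (n - m)); rewrite -exprD subnKC. Qed.

Lemma irr_mul_unit (p u : S) : irreducibleS p -> unitS u -> irreducibleS (p * u).
Proof.
move=> [p0 [pu hp]] hu; split; first by rewrite mulf_neq0 //; apply: contraTneq hu => ->; rewrite /unitS unitr0.
split.
  by move=> h; apply: pu; apply: (@dvd_unit _ (p * u)) => //; apply: dvd_mulr; apply: dvd_refl.
move=> a b e.
have : p = a * (b * u^-1) by rewrite mulrA -e mulrK.
move=> /hp [] ha; first by left.
right; have -> : b = (b * u^-1) * u by rewrite mulrVK.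
exact: unitSM.
Qed.

Lemma mem_dvd_prod (y : S) (l : seq S) : y \in l -> dvdS y (\prod_(p <- l) p).
Proof.
elim: l => // a l IH; rewrite in_cons big_cons => /orP[/eqP ->|h].
  by apply: dvd_mulr; apply: dvd_refl.
by apply: dvd_mull; apply: IH.
Qed.

Lemma irr_neq0 (p : S) : irreducibleS p -> p != 0. Proof. by case. Qed.
Lemma irr_nunit (p : S) : irreducibleS p -> ~ unitS p. Proof. by case=> _ []. Qed.

Lemma irr_dvd_irr (p q : S) : irreducibleS p -> irreducibleS q -> dvdS p q -> dvdS q p.
Proof.
move=> hp [_ [_ hq]] [c ec]; have [] := hq _ _ ec => h.
  by case: (irr_nunit hp).
by exists c^-1; rewrite ec mulrK.
Qed.

End Basics.
Arguments unitS1 {S}.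

Section UFD.
Variable S : idomainType.
Hypothesis hS : is_UFD S.

Lemma ufd_fact0 (x : S) : x != 0 -> exists u (l : seq S), unitS u /\
  (forall p, p \in l -> irreducibleS p) /\ x = u * \prod_(p <- l) p.
Proof.
move=> x0; case: (boolP (x \is a GRing.unit)) => hx.
  by exists x, [::]; rewrite big_nil mulr1.
have [l [hl ->]] := hS.1 x x0 (fun h => (negP hx) h).
by exists 1, l; rewrite mul1r; split => //; exact: unitS1.
Qed.

Lemma irr_prime (p : S) : irreducibleS p -> forall a b, dvdS p (a * b) -> dvdS p a \/ dvdS p b.
Proof.
move=> hp a b [c hc].
have [->|a0] := eqVneq a 0; first by left; apply: dvd0.
have [->|b0] := eqVneq b 0; first by right; apply: dvd0.
have c0 : c != 0.
  by apply: contraNneq (mulf_neq0 a0 b0) => c0; rewrite hc c0 mulr0.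
have [ua [la [hua [hla ea]]]] := ufd_fact0 a0.
have [ub [lb [hub [hlb eb]]]] := ufd_fact0 b0.
have [uc [lc [huc [hlc ec]]]] := ufd_fact0 c0.
set k := ua * ub.
have hk : unitS k by apply: unitSM.
have hw : unitS (uc * k^-1) by apply: unitSM => //; apply: unitSV.
have E : \prod_(q <- la ++ lb) q = \prod_(q <- (p * (uc * k^-1)) :: lc) q.
  rewrite big_cat big_cons /=; apply: (mulrI hk).
  have -> : k * (p * (uc * k^-1) * \prod_(j <- lc) j)
        = (k * k^-1) * (p * (uc * \prod_(j <- lc) j)) by ring.
  rewrite mulrV // mul1r -ec -hc ea eb /k; ring.
have hL : forall q, q \in la ++ lb -> irreducibleS q.
  by move=> q; rewrite mem_cat => /orP[]; [apply: hla|apply: hlb].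
have hR : forall q, q \in (p * (uc * k^-1)) :: lc -> irreducibleS q.
  move=> q; rewrite in_cons => /orP[/eqP ->|]; last by apply: hlc.
  exact: irr_mul_unit.
have [qs' [hperm [hsz hass]]] := hS.2 _ _ hL hR E.
have : p * (uc * k^-1) \in qs' by rewrite -(perm_mem hperm) mem_head.
move=> /(nthP 0) [i hi ei].
have hi' : (i < size (la ++ lb))%N by rewrite hsz.
have [u [hu eu]] := hass i hi'.
set y := nth 0 (la ++ lb) i in eu.
have hy : y \in la ++ lb by apply: mem_nth.
have pdy : dvdS p y.
  exists (uc * k^-1 * u^-1); rewrite mulrA -ei eu mulrC mulrA mulVr // mul1r //.
move: hy; rewrite mem_cat => /orP[] hy.
  left; apply: (dvd_trans pdy); rewrite ea; apply: dvd_mull; exact: mem_dvd_prod.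
right; apply: (dvd_trans pdy); rewrite eb; apply: dvd_mull; exact: mem_dvd_prod.
Qed.

End UFD.


Section UFD2.
Variable S : idomainType.
Hypothesis hS : is_UFD S.

Lemma irr_ndvd_unit (p u : S) : irreducibleS p -> unitS u -> ~ dvdS p u.
Proof. by move=> hp hu hd; apply: (irr_nunit hp); apply: dvd_unit hd hu. Qed.

Lemma prime_dvd_big (p : S) (I : Type) (r : seq I) (P : pred I) (f : I -> S) :
  irreducibleS p -> dvdS p (\prod_(i <- r | P i) f i) -> exists i, P i /\ dvdS p (f i).
Proof.
move=> hp; elim: r => [|a r IH]; first by rewrite big_nil => /irr_ndvd_unit; case/(_ hp unitS1).
rewrite big_cons; case: ifP => Pa; last exact: IH.
by case/(irr_prime hS hp) => [h|]; [exists a|exact: IH].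
Qed.

Lemma prime_dvd_exp (p a : S) n : irreducibleS p -> dvdS p (a ^+ n) -> dvdS p a.
Proof.
move=> hp; elim: n => [|n IH]; first by rewrite expr0 => /irr_ndvd_unit; case/(_ hp unitS1).
by rewrite exprS => /(irr_prime hS hp) [|/IH].
Qed.

Lemma div_prime_pow (p c : S) n : irreducibleS p -> dvdS c (p ^+ n) ->
  exists v k, unitS v /\ c = v * p ^+ k.
Proof.
move=> hp; elim: n c => [|n IH] c.
  rewrite expr0 => hc; exists c, 0%N; rewrite expr0 mulr1; split => //.
  exact: dvd_unit hc unitS1.
move=> [d hd].
have p0 := irr_neq0 hp.
have : dvdS p (c * d) by rewrite -hd; apply: dvd_exp.
case/(irr_prime hS hp) => [[c' ec]|[d' ed]].
  have : dvdS c' (p ^+ n).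
    exists d; apply: (mulfI p0); rewrite -exprS hd ec; ring.
  case/IH => v [k [hv ek]]; exists v, k.+1; split => //; rewrite ec ek exprS; ring.
apply: IH; exists d'; apply: (mulfI p0); rewrite -exprS hd ed; ring.
Qed.

Lemma prime_dvd_list (p : S) (l : seq S) : irreducibleS p ->
  dvdS p (\prod_(y <- l) y) -> exists2 y, y \in l & dvdS p y.
Proof.
move=> hp; elim: l => [|a l IH]; first by rewrite big_nil => /irr_ndvd_unit; case/(_ hp unitS1).
rewrite big_cons => /(irr_prime hS hp) [h|/IH [y hy hpy]]; first by exists a; rewrite ?mem_head.
by exists y; rewrite // in_cons hy orbT.
Qed.

Lemma extract (p a : S) : irreducibleS p -> a != 0 ->
  exists m b, a = p ^+ m * b /\ ~ dvdS p b.
Proof.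
move=> hp a0; have [u [l [hu [hl ea]]]] := ufd_fact0 hS a0.
have p0 := irr_neq0 hp.
move: {2}(size l) (erefl (size l)) => n.
elim: n l a u hu hl ea {a0} => [|n IH] l a u hu hl ea hn.
  exists 0%N, a; rewrite expr0 mul1r; split => //.
  move: hn => /size0nil hn; rewrite ea hn big_nil mulr1; exact: irr_ndvd_unit.
case: (classic (dvdS p a)) => [hpa|hpa]; last by exists 0%N, a; rewrite expr0 mul1r.
have : dvdS p (\prod_(j <- l) j).
  by move: hpa; rewrite ea => /(irr_prime hS hp) [/(irr_ndvd_unit hp)|].
case/(prime_dvd_list hp) => y hy hpy.
have [c ec] := hpy.
have hc : unitS c.
  have [_ [_ hq]] := hl y hy.
  by case: (hq _ _ ec) => // /irr_nunit; case; apply: hp.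
have := IH (rem y l) (u * c * \prod_(j <- rem y l) j) (u * c) (unitSM hu hc).
case.
- by move=> z /mem_rem; apply: hl.
- by [].
- by rewrite size_rem // hn.
move=> m [b [eb hb]]; exists m.+1, b; split => //.
rewrite ea (big_rem y hy) /= exprS -mulrA -eb {1}ec; ring.

Qed.

Lemma coprime_cancel (p a y : S) N : irreducibleS p -> ~ dvdS p a ->
  dvdS a (y * p ^+ N) -> dvdS a y.
Proof.
move=> hp hpa; elim: N y => [|N IH] y; first by rewrite expr0 mulr1.
move=> [g eg]; apply: IH.
have : dvdS p (a * g) by rewrite -eg exprS; apply: dvd_mull; apply: dvd_mulr; apply: dvd_refl.
case/(irr_prime hS hp) => // -[g' eg']; exists g'.
apply: (mulfI (irr_neq0 hp)); rewrite mulrCA -exprS eg eg'; ring.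
Qed.

End UFD2.


Lemma inj_perm_gen (n n' : nat) (R : nat -> nat -> Prop) :
  (forall i, (i < n)%N -> exists j, (j < n')%N /\ R i j) ->
  (forall i i' j, (i < n)%N -> (i' < n)%N -> R i j -> R i' j -> i = i') ->
  exists sg : nat -> nat, (forall i, (i < n)%N -> (sg i < n')%N /\ R i (sg i)) /\
    uniq (map sg (iota 0 n)) /\ {subset map sg (iota 0 n) <= iota 0 n'}.
Proof.
move=> hex hinj.
pose sg i := epsilon (inhabits 0%N) (fun j => (i < n)%N -> (j < n')%N /\ R i j).
have hsg : forall i, (i < n)%N -> (sg i < n')%N /\ R i (sg i).
  move=> i hi; apply: (epsilon_spec (inhabits 0%N) (fun j => (i < n)%N -> (j < n')%N /\ R i j)) => //.
  by have [j hj] := hex i hi; exists j.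
exists sg; split => //; split.
  rewrite map_inj_in_uniq ?iota_uniq // => i i'; rewrite !mem_iota !add0n => hi hi' e.
  by apply: (hinj i i' (sg i)) => //; [apply: (hsg i hi).2|rewrite e; apply: (hsg i' hi').2].
move=> j /mapP [i]; rewrite mem_iota add0n => hi ->.
by rewrite mem_iota add0n; apply: (hsg i hi).1.
Qed.

Lemma inj_le (n n' : nat) (R : nat -> nat -> Prop) :
  (forall i, (i < n)%N -> exists j, (j < n')%N /\ R i j) ->
  (forall i i' j, (i < n)%N -> (i' < n)%N -> R i j -> R i' j -> i = i') ->
  (n <= n')%N.
Proof.
move=> hex hinj; have [sg [_ [hu hsub]]] := inj_perm_gen hex hinj.
by have := uniq_leq_size hu hsub; rewrite size_map !size_iota.
Qed.

Lemma inj_perm (es fs : seq nat) (R : nat -> nat -> Prop) :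
  size es = size fs ->
  (forall i, (i < size es)%N -> exists j, (j < size fs)%N /\ R i j) ->
  (forall i i' j, (i < size es)%N -> (i' < size es)%N -> R i j -> R i' j -> i = i') ->
  (forall i j, R i j -> nth 0%N es i = nth 0%N fs j) ->
  perm_eq es fs.
Proof.
move=> hsz hex hinj hval; have [sg [hsg [hu hsub]]] := inj_perm_gen hex hinj.
have hle : (size (iota 0 (size fs)) <= size (map sg (iota 0 (size es))))%N.
  by rewrite size_map !size_iota hsz.
have [hs hi] := uniq_min_size hu hsub hle.
have hp : perm_eq (map sg (iota 0 (size es))) (iota 0 (size fs)).
  by apply: uniq_perm => //; apply: iota_uniq.
have -> : es = map (nth 0%N fs) (map sg (iota 0 (size es))).
  rewrite -map_comp -{1}(mkseq_nth 0%N es) /mkseq; apply/eq_in_map => i.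
  by rewrite mem_iota add0n => h /=; apply: hval; apply: (hsg i h).2.
apply: (perm_trans (perm_map (nth 0%N fs) hp)).
by rewrite -/(mkseq _ _) mkseq_nth.
Qed.

Section Uniq.
Variable S : idomainType.
Hypothesis hS : is_UFD S.

Definition fdata (x u : S) (ps : seq S) (es : seq nat) :=
  unitS u /\ size ps = size es /\
  (forall i, (i < size ps)%N -> irreducibleS (nth 0 ps i)) /\
  (forall i j, (i < size ps)%N -> (j < size ps)%N -> i <> j ->
        coprimeS (nth 0 ps i) (nth 0 ps j)) /\
  x = u * \prod_(i < size ps) (nth 0 ps i) ^+ (nth 0%N es i).

Lemma dvd_exp2 (a b : S) k : dvdS a b -> dvdS (a ^+ k) (b ^+ k).
Proof. by move=> [c ->]; exists (c ^+ k); rewrite exprMn. Qed.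

Lemma val_fact x u ps es i k : fdata x u ps es -> (i < size ps)%N ->
  dvdS ((nth 0 ps i) ^+ k) x <-> (k <= nth 0%N es i)%N.
Proof.
move=> [hu [hsz [hirr [hcop ex]]]] hi.
set p := nth 0 ps i.
pose i0 := Ordinal hi.
have ex' : x = p ^+ (nth 0%N es i) *
   (u * \prod_(j < size ps | j != i0) (nth 0 ps j) ^+ (nth 0%N es j)).
  by rewrite ex (bigD1 i0) //=; ring.
set m := u * _ in ex'.
have hp := hirr i hi.
split; last first.
  move=> hk; rewrite ex'; apply: dvd_mulr; exact: dvd_expW.
move=> hd; rewrite leqNgt; apply/negP => hk.
have : dvdS (p ^+ (nth 0%N es i).+1) x by apply: dvd_trans (dvd_expW _ hk) hd.
rewrite ex' => -[c ec].
have hpm : dvdS p m.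
  exists c; apply: (mulfI (expf_neq0 (nth 0%N es i) (irr_neq0 hp))).
  by rewrite ec exprS; ring.
move: hpm; rewrite /m => /(irr_prime hS hp) [/(irr_ndvd_unit hp)|]; first by apply.
case/(prime_dvd_big hS hp) => j [hji /(prime_dvd_exp hS hp) hpj].
apply: (irr_nunit hp).
have ne : i <> j by move=> e; move: hji; rewrite -val_eqE /= e eqxx.
exact: (hcop i j hi (ltn_ord j) ne p (dvd_refl p) hpj).
Qed.

Lemma fact_half x u ps es v qs fs : fdata x u ps es -> fdata x v qs fs ->
  (forall i, (i < size es)%N -> (1 <= nth 0%N es i)%N) ->
  forall i, (i < size es)%N -> exists j, (j < size fs)%N /\
    (dvdS (nth 0 ps i) (nth 0 qs j) /\ dvdS (nth 0 qs j) (nth 0 ps i)).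
Proof.
move=> hd1 hd2 h1 i hi.
have hi' : (i < size ps)%N by rewrite hd1.2.1.
have hp := hd1.2.2.1 i hi'.
have : dvdS (nth 0 ps i ^+ 1) x by apply/(val_fact _ hd1 hi'); apply: h1.
rewrite expr1; case: hd2 => [hv [hsz [hirr [hcop ->]]]].
case/(irr_prime hS hp) => [/(irr_ndvd_unit hp)|]; first by case.
case/(prime_dvd_big hS hp) => j [_ /(prime_dvd_exp hS hp) hpj].
exists j; rewrite -hsz ltn_ord; split => //; split => //.
exact: irr_dvd_irr (hirr j (ltn_ord j)) hpj.
Qed.

Lemma fact_inj x u ps es (q : S) i i' : fdata x u ps es -> irreducibleS q ->
  (i < size ps)%N -> (i' < size ps)%N ->
  dvdS q (nth 0 ps i) -> dvdS q (nth 0 ps i') -> i = i'.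
Proof.
move=> [_ [_ [_ [hcop _]]]] hq hi hi' h1 h2.
case: (eqVneq i i') => // /eqP ne; case: (irr_nunit hq).
exact: hcop i i' hi hi' ne q h1 h2.
Qed.

Lemma mutual_val x u ps es v qs fs i j : fdata x u ps es -> fdata x v qs fs ->
  (i < size ps)%N -> (j < size qs)%N ->
  dvdS (nth 0 ps i) (nth 0 qs j) -> dvdS (nth 0 qs j) (nth 0 ps i) ->
  nth 0%N es i = nth 0%N fs j.
Proof.
move=> hd1 hd2 hi hj h1 h2; apply/eqP; rewrite eqn_leq; apply/andP; split.
  apply/(val_fact _ hd2 hj); apply: dvd_trans (dvd_exp2 _ h2) _.
  by apply/(val_fact _ hd1 hi).
apply/(val_fact _ hd1 hi); apply: dvd_trans (dvd_exp2 _ h1) _.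
by apply/(val_fact _ hd2 hj).
Qed.

Lemma fact_uniq (x : S) es fs : factorization x es -> factorization x fs -> es = fs.
Proof.
move=> [u [ps [hu [hsz [hirr [hcop [h1 [hso ex]]]]]]]].
move=> [v [qs [hv [hsz' [hirr' [hcop' [h1' [hso' ex']]]]]]]].
have hd1 : fdata x u ps es by [].
have hd2 : fdata x v qs fs by [].
pose R := fun i j => (i < size es)%N /\ (j < size fs)%N /\
   (dvdS (nth 0 ps i) (nth 0 qs j) /\ dvdS (nth 0 qs j) (nth 0 ps i)).
have hex : forall i, (i < size es)%N -> exists j, (j < size fs)%N /\ R i j.
  move=> i hi; have [j [hj hh]] := fact_half hd1 hd2 h1 hi.
  by exists j; split => //; exact: (conj hi (conj hj hh)).
have hinj : forall i i' j, (i < size es)%N -> (i' < size es)%N -> R i j -> R i' j -> i = i'.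
  move=> i i' j hi hi' [_ [hj [_ a]]] [_ [_ [_ b]]].
  apply: (fact_inj hd1 (hirr' j _) _ _ a b); by rewrite ?hsz ?hsz'.
have hle : (size es <= size fs)%N by apply: inj_le hex hinj.
have hge : (size fs <= size es)%N.
  apply: (@inj_le _ _ (fun j i => R i j)).
    move=> j hj; have [i [hi hh]] := fact_half hd2 hd1 h1' hj.
    by exists i; split => //; case: hh => a b; exact: (conj hi (conj hj (conj b a))).
  move=> j j' i hj hj' [hi [_ [a _]]] [_ [_ [b _]]].
  apply: (fact_inj hd2 (hirr i _) _ _ a b); by rewrite ?hsz ?hsz'.
have hsize : size es = size fs by apply/eqP; rewrite eqn_leq hle hge.
apply: (sorted_eq leq_trans anti_leq hso hso').
apply: (inj_perm hsize hex hinj).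
move=> i j [hi [hj [a b]]].
by apply: (mutual_val hd1 hd2 _ _ a b); rewrite ?hsz ?hsz'.
Qed.
End Uniq.


Section Frac.
Variable S : idomainType.
Implicit Types a b c : S.
Lemma fracS0 : fracS (0 : S) = 0. Proof. exact: rmorph0. Qed.
Lemma fracS1 : fracS (1 : S) = 1. Proof. exact: rmorph1. Qed.
Lemma fracSM a b : fracS (a * b) = fracS a * fracS b. Proof. exact: rmorphM. Qed.
Lemma fracSD a b : fracS (a + b) = fracS a + fracS b. Proof. exact: rmorphD. Qed.
Lemma fracSB a b : fracS (a - b) = fracS a - fracS b. Proof. exact: rmorphB. Qed.
Lemma fracSN a : fracS (- a) = - fracS a. Proof. exact: rmorphN. Qed.
Lemma fracSX a n : fracS (a ^+ n) = fracS a ^+ n. Proof. exact: rmorphXn. Qed.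
Lemma fracS_inj a b : fracS a = fracS b -> a = b.
Proof. by move=> h; apply/eqP; rewrite -tofrac_eq; apply/eqP. Qed.
Lemma fracS_eq0 a : (fracS a == 0) = (a == 0). Proof. exact: tofrac_eq0. Qed.
Lemma fracS_prod (I : Type) (r : seq I) (P : pred I) (f : I -> S) :
  fracS (\prod_(i <- r | P i) f i) = \prod_(i <- r | P i) fracS (f i).
Proof. exact: rmorph_prod. Qed.
Lemma fracSV a : unitS a -> fracS (a^-1) = (fracS a)^-1.
Proof.
move=> ha; have h : fracS a * fracS a^-1 = 1 by rewrite -fracSM mulrV // fracS1.
have a0 : fracS a != 0.
  by apply/eqP => e; move: h; rewrite e mul0r => /eqP; rewrite eq_sym oner_eq0.
by apply: (mulfI a0); rewrite h divff.
Qed.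
End Frac.

Definition unitR (S : idomainType) (F : S) (z : {fraction S}) :=
  in_loc F z /\ exists w, in_loc F w /\ z * w = 1.
Definition dvdR (S : idomainType) (F : S) (d a : {fraction S}) :=
  exists c, in_loc F c /\ a = d * c.
Definition irrR (S : idomainType) (F : S) (p : {fraction S}) :=
  in_loc F p /\ p != 0 /\ ~ unitR F p /\
  forall a b, in_loc F a -> in_loc F b -> p = a * b -> unitR F a \/ unitR F b.
Definition coprimeR (S : idomainType) (F : S) (a b : {fraction S}) :=
  forall d, in_loc F d -> dvdR F d a -> dvdR F d b -> unitR F d.
Definition factR (S : idomainType) (F : S) (x : {fraction S}) (es : seq nat) :=
  exists w (qs : seq {fraction S}), unitR F w /\ size qs = size es /\
    (forall i, (i < size qs)%N -> irrR F (nth 0 qs i)) /\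
    (forall i j, (i < size qs)%N -> (j < size qs)%N -> i <> j ->
        coprimeR F (nth 0 qs i) (nth 0 qs j)) /\
    x = w * \prod_(i < size qs) (nth 0 qs i) ^+ (nth 0%N es i).

Section Loc.
Variable S : idomainType.
Variable F : S.
Hypothesis hF0 : F != 0.
Local Notation Fr := (fracS F).

Lemma Fr0 : Fr != 0. Proof. by rewrite fracS_eq0. Qed.
Lemma FrX0 n : Fr ^+ n != 0. Proof. by rewrite expf_neq0 // Fr0. Qed.

Lemma in_loc_S a : in_loc F (fracS a).
Proof. by exists a, 0%N; rewrite expr0 divr1. Qed.
Lemma in_loc0 : in_loc F 0. Proof. by rewrite -(fracS0 S); apply: in_loc_S. Qed.
Lemma in_loc1 : in_loc F 1. Proof. by rewrite -(fracS1 S); apply: in_loc_S. Qed.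
Lemma in_locM z w : in_loc F z -> in_loc F w -> in_loc F (z * w).
Proof.
move=> [a [n ->]] [b [m ->]]; exists (a * b), (n + m)%N.
by rewrite mulf_div fracSM exprD.
Qed.
Lemma in_locD z w : in_loc F z -> in_loc F w -> in_loc F (z + w).
Proof.
move=> [a [n ->]] [b [m ->]]; exists (a * F ^+ m + b * F ^+ n), (n + m)%N.
rewrite fracSD !fracSM !fracSX exprD mulrDl.
have h1 := FrX0 n; have h2 := FrX0 m.
by congr (_ + _); [|rewrite (mulrC (Fr ^+ n))]; rewrite invfM mulrACA divff // mulr1.
Qed.
Lemma in_locN z : in_loc F z -> in_loc F (- z).
Proof. by move=> [a [n ->]]; exists (- a), n; rewrite fracSN mulNr. Qed.
Lemma in_locB z w : in_loc F z -> in_loc F w -> in_loc F (z - w).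
Proof. by move=> hz hw; apply: in_locD => //; apply: in_locN. Qed.
Lemma in_locX z n : in_loc F z -> in_loc F (z ^+ n).
Proof.
move=> hz; elim: n => [|n IH]; first by rewrite expr0; apply: in_loc1.
by rewrite exprS; apply: in_locM.
Qed.
Lemma in_loc_prod (I : Type) (r : seq I) (P : pred I) (f : I -> {fraction S}) :
  (forall i, P i -> in_loc F (f i)) -> in_loc F (\prod_(i <- r | P i) f i).
Proof.
move=> h; apply: (big_ind (in_loc F)) => //; first exact: in_loc1.
exact: in_locM.
Qed.
Lemma in_loc_div a n : in_loc F (fracS a / Fr ^+ n).
Proof. by exists a, n. Qed.
Lemma in_loc_FrV : in_loc F (Fr^-1).
Proof. by exists 1, 1%N; rewrite fracS1 expr1 mul1r. Qed.
Lemma in_loc_Frz (j : int) : in_loc F (Fr ^ j).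
Proof.
case: j => n; first by rewrite -exprnP -fracSX; apply: in_loc_S.
by rewrite NegzE -exprnN; exists 1, n.+1; rewrite fracS1 mul1r.
Qed.

Lemma unitR_unitS v : unitS v -> unitR F (fracS v).
Proof.
move=> hv; split; first exact: in_loc_S.
by exists (fracS v^-1); split; [apply: in_loc_S|rewrite -fracSM mulrV // fracS1].
Qed.
Lemma unitR_Frz (j : int) : unitR F (Fr ^ j).
Proof.
split; first exact: in_loc_Frz.
exists (Fr ^ (- j)); split; first exact: in_loc_Frz.
by rewrite -expfzDr ?Fr0 // subrr expr0z.
Qed.
Lemma unitRM z w : unitR F z -> unitR F w -> unitR F (z * w).
Proof.
move=> [hz [z' [hz' ez]]] [hw [w' [hw' ew]]]; split; first exact: in_locM.
exists (z' * w'); split; first exact: in_locM.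
by rewrite mulrACA ez ew mulr1.
Qed.
Lemma unitR_neq0 z : unitR F z -> z != 0.
Proof. by move=> [_ [w [_ e]]]; apply/eqP => z0; move: e; rewrite z0 mul0r => /eqP; rewrite eq_sym oner_eq0. Qed.
Lemma unitRV z : unitR F z -> unitR F z^-1.
Proof.
move=> hz; have z0 := unitR_neq0 hz; case: hz => [hz [w [hw e]]].
have -> : z^-1 = w by apply: (mulfI z0); rewrite e divff.
split => //; exists z; split => //; by rewrite mulrC.
Qed.
Lemma unitR_inv z : unitR F z -> in_loc F z^-1.
Proof. by move/unitRV => []. Qed.
Lemma unitR1 : unitR F 1.
Proof. by rewrite -(fracS1 S); apply: unitR_unitS; apply: unitS1. Qed.
Lemma unitRX z n : unitR F z -> unitR F (z ^+ n).
Proof.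
move=> hz; elim: n => [|n IH]; first by rewrite expr0; apply: unitR1.
by rewrite exprS; apply: unitRM.
Qed.
Lemma unitRN z : unitR F z -> unitR F (- z).
Proof.
move=> hz; rewrite -mulN1r; apply: unitRM => //.
rewrite -(fracS1 S) -fracSN; apply: unitR_unitS.
by rewrite /unitS unitrN unitr1.
Qed.
End Loc.


Section Trans.
Variable S : idomainType.
Variables F F' : S.
Hypothesis hF0 : F != 0.
Hypothesis hF'0 : F' != 0.
Variable D : {fraction S} -> {fraction S}.
Hypothesis hD : loc_ring_iso F F' D.

Let hin := hD.1.
Let hadd := hD.2.1.
Let hmul := hD.2.2.1.
Let h1 := hD.2.2.2.1.
Let hinj := hD.2.2.2.2.1.
Let hsurj := hD.2.2.2.2.2.

Lemma D0 : D 0 = 0.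
Proof.
have := hadd (in_loc0 F) (in_loc0 F); rewrite addr0 => e.
by apply: (@addrI _ (D 0)); rewrite addr0 -e.
Qed.

Lemma DN z : in_loc F z -> D (- z) = - D z.
Proof.
move=> hz; have e := hadd (in_locN hz) hz; rewrite addNr D0 in e.
by apply/eqP; rewrite -addr_eq0 -e.
Qed.

Lemma DB z w : in_loc F z -> in_loc F w -> D (z - w) = D z - D w.
Proof. by move=> hz hw; rewrite hadd ?DN //; apply: in_locN. Qed.

Lemma Dprod (I : Type) (r : seq I) (P : pred I) (f : I -> {fraction S}) :
  (forall i, P i -> in_loc F (f i)) ->
  D (\prod_(i <- r | P i) f i) = \prod_(i <- r | P i) D (f i).
Proof.
move=> hf; elim: r => [|a r IH]; first by rewrite !big_nil h1.
rewrite !big_cons; case: ifP => // Pa.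
by rewrite hmul ?IH //; [apply: hf|apply: in_loc_prod].
Qed.

Lemma DX z n : in_loc F z -> D (z ^+ n) = D z ^+ n.
Proof.
move=> hz; elim: n => [|n IH]; first by rewrite !expr0 h1.
by rewrite !exprS hmul ?IH //; apply: in_locX.
Qed.

Lemma D_unitR z : unitR F z -> unitR F' (D z).
Proof.
move=> [hz [w [hw e]]]; split; first exact: hin.
by exists (D w); split; [apply: hin|rewrite -hmul // e h1].
Qed.

Lemma D_unitR_back z : in_loc F z -> unitR F' (D z) -> unitR F z.
Proof.
move=> hz [_ [w' [hw' e]]]; have [w [hw ew]] := hsurj hw'; rewrite -ew in e.
split => //; exists w; split => //; apply: hinj; rewrite ?hmul ?h1 //.
- exact: in_locM.
- exact: in_loc1.
Qed.

Lemma D_neq0 z : in_loc F z -> z != 0 -> D z != 0.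
Proof.
move=> hz z0; apply/eqP => e; move/eqP: z0; apply; apply: hinj => //.
  exact: in_loc0.
by rewrite e D0.
Qed.

Lemma D_dvdR_back d p : in_loc F d -> in_loc F p -> dvdR F' (D d) (D p) -> dvdR F d p.
Proof.
move=> hd hp [c' [hc' e]]; have [c [hc ec]] := hsurj hc'.
exists c; split => //; apply: hinj => //; first exact: in_locM.
by rewrite hmul // ec.
Qed.

Lemma D_irr p : irrR F p -> irrR F' (D p).
Proof.
move=> [hp [p0 [pu hsplit]]]; split; first exact: hin.
split; first exact: D_neq0.
split; first by move=> h; apply: pu; apply: D_unitR_back.
move=> a' b' ha' hb' e.
have [a [ha ea]] := hsurj ha'; have [b [hb eb]] := hsurj hb'; subst a' b'.
have : p = a * b by apply: hinj => //; [apply: in_locM|rewrite hmul].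
by case/(hsplit _ _ ha hb) => h; [left|right]; apply: D_unitR.
Qed.

Lemma D_coprime p q : in_loc F p -> in_loc F q -> coprimeR F p q -> coprimeR F' (D p) (D q).
Proof.
move=> hp hq hc d' hd' h1' h2'; have [d [hd ed]] := hsurj hd'; subst d'.
apply: D_unitR; apply: hc => //; exact: D_dvdR_back.
Qed.

Lemma irrR_in p : irrR F p -> in_loc F p. Proof. by case. Qed.

Lemma D_factR x es : factR F x es -> factR F' (D x) es.
Proof.
move=> [w [qs [hw [hsz [hirr [hcop ex]]]]]].
exists (D w), (map D qs); split; first exact: D_unitR.
rewrite size_map; split => //; split.
  by move=> i hi; rewrite (nth_map 0) //; apply: D_irr; apply: hirr.
split.
  move=> i j hi hj ne; rewrite !(nth_map 0) //.
  by apply: D_coprime; [apply: irrR_in; apply: hirr|apply: irrR_in; apply: hirr|apply: hcop].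
have hin_i : forall i : 'I_(size qs), in_loc F (nth 0 qs i ^+ nth 0%N es i).
  by move=> i; apply: in_locX; apply: irrR_in; apply: hirr.
rewrite ex hmul; first last.
- by apply: in_loc_prod.
- by case: hw.
rewrite Dprod; last by move=> i _; apply: hin_i.
congr (_ * _); apply: eq_bigr => i _.
by rewrite DX ?(nth_map 0) //; apply: irrR_in; apply: hirr.
Qed.

Lemma DV y : unitR F y -> D (y^-1) = (D y)^-1.
Proof.
move=> hy; have y0 := unitR_neq0 hy.
have hDy := D_unitR hy; have Dy0 := unitR_neq0 hDy.
have e : D y * D (y^-1) = 1.
  by rewrite -hmul ?divff ?h1 //; [case: hy|apply: unitR_inv].
by rewrite -[RHS]mulr1 -e mulKf.
Qed.

Lemma DZ y (l : int) : unitR F y -> D (y ^ l) = (D y) ^ l.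
Proof.
move=> hy; case: l => n; first by rewrite -!exprnP DX //; case: hy.
rewrite NegzE -!exprnN DV ?DX //; first by case: hy.
exact: unitRX.
Qed.

End Trans.


Section Clear.
Variable S : idomainType.
Variable F : S.
Hypothesis hF0 : F != 0.
Local Notation Fr := (fracS F).

Lemma clear_den x y N : fracS x = fracS y / Fr ^+ N -> x * F ^+ N = y.
Proof.
move=> e; apply: fracS_inj; rewrite fracSM fracSX e divfK //; exact: FrX0.
Qed.

Lemma mul_div_loc a b n m :
  fracS a / Fr ^+ n * (fracS b / Fr ^+ m) = fracS (a * b) / Fr ^+ (n + m).
Proof. by rewrite mulf_div fracSM exprD. Qed.

Lemma unitR_Fr : unitR F Fr.
Proof. by have := unitR_Frz hF0 1; rewrite expr1z. Qed.

Lemma unitR_prod (I : Type) (r : seq I) (P : pred I) (f : I -> {fraction S}) :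
  (forall i, P i -> unitR F (f i)) -> unitR F (\prod_(i <- r | P i) f i).
Proof.
move=> h; apply: (big_ind (unitR F)) => //; first exact: unitR1.
exact: unitRM.
Qed.

Lemma Frz_split (k n : nat) : Fr ^+ k / Fr ^+ n = Fr ^ (k%:Z - n%:Z).
Proof. by rewrite expfzDr ?Fr0 // exprnN -exprnP. Qed.

End Clear.

Section Irr.
Variable S : idomainType.
Hypothesis hS : is_UFD S.
Variable F : S.
Hypothesis hF : irreducibleS F.
Local Notation Fr := (fracS F).

Let hF0 : F != 0 := irr_neq0 hF.

Lemma unitR_div b m N : dvdS b (F ^+ N) -> unitR F (fracS b / Fr ^+ m).
Proof.
move=> h; have [v [k [hv ->]]] := div_prime_pow hS hF h.
rewrite fracSM fracSX -mulrA; apply: unitRM; first exact: unitR_unitS.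
apply: unitRM; first by apply: unitRX; apply: unitR_Fr.
by apply: unitRV => //; apply: unitRX; apply: unitR_Fr.
Qed.

Lemma unitR_rep z : unitR F z -> exists v (j : int), unitS v /\ z = fracS v * Fr ^ j.
Proof.
move=> [[a [n ez]] [w [[b [m ew]] e]]].
move: e; rewrite ez ew mul_div_loc => e.
have e' : a * b = F ^+ (n + m).
  apply: fracS_inj; have := divfK (FrX0 hF0 (n + m)) (fracS (a * b)).
  by rewrite e mul1r fracSX => <-.
have [v [k [hv ea]]] := div_prime_pow hS hF (ex_intro _ b (esym e') : dvdS a _).
exists v, (k%:Z - n%:Z); split => //.
by rewrite ea fracSM fracSX -mulrA Frz_split.
Qed.

Lemma Fr_int0 x y (j : int) : ~ dvdS F x -> ~ dvdS F y -> fracS x = fracS y * Fr ^ j -> j = 0.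
Proof.
move=> hx hy; case: j => n.
  rewrite -exprnP -fracSX -fracSM => /fracS_inj e.
  case: n e => // n e; case: hx; rewrite e; apply: dvd_mull; exact: dvd_exp.
rewrite NegzE -exprnN => e; case: hy.
have : fracS x * Fr ^+ n.+1 = fracS y.
  by rewrite e -mulrA mulVf ?mulr1 //; exact: FrX0.
rewrite -fracSX -fracSM => /fracS_inj <-; apply: dvd_mull; exact: dvd_exp.
Qed.

Lemma unitR_S c : unitR F (fracS c) -> ~ dvdS F c -> unitS c.
Proof.
move=> /unitR_rep [v [j [hv e]]] hc.
have j0 := Fr_int0 hc (irr_ndvd_unit hF hv) e.
by move: e; rewrite j0 expr0z mulr1 => /fracS_inj ->.
Qed.

Lemma irrR_of_irr p : irreducibleS p -> ~ dvdS F p -> irrR F (fracS p).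
Proof.
move=> hp hFp; split; first exact: in_loc_S.
split; first by rewrite fracS_eq0; exact: irr_neq0 hp.
split; first by move=> h; apply: (irr_nunit hp); apply: unitR_S.
move=> z w [a [n ez]] [b [m ew]] e.
move: e; rewrite ez ew mul_div_loc => /(clear_den hF0) e.
have : dvdS p (a * b) by rewrite -e; apply: dvd_mulr; apply: dvd_refl.
case/(irr_prime hS hp) => [[a' ea]|[b' eb]].
  right; apply: (@unitR_div _ _ (n + m)).
  exists a'; apply: (mulfI (irr_neq0 hp)); rewrite e ea; ring.
left; apply: (@unitR_div _ _ (n + m)).
exists b'; apply: (mulfI (irr_neq0 hp)); rewrite e eb; ring.
Qed.

Lemma rep_d d : in_loc F d -> d != 0 ->
  exists a k n, ~ dvdS F a /\ d = fracS (a * F ^+ k) / Fr ^+ n.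
Proof.
move=> [a0 [n ed]] d0.
have a00 : a0 != 0 by apply: contraNneq d0 => e; rewrite ed e fracS0 mul0r.
have [k [a [ea ha]]] := extract hS hF a00.
by exists a, k, n; split => //; rewrite ed ea (mulrC (F ^+ k)).
Qed.

Lemma dvdR_S a k n p : ~ dvdS F a ->
  dvdR F (fracS (a * F ^+ k) / Fr ^+ n) (fracS p) -> dvdS a p.
Proof.
move=> ha [c [[e [m ec]] hp]]; move: hp; rewrite ec mul_div_loc => /(clear_den hF0) hp.
apply: (coprime_cancel hS hF ha (N := (n + m)%N)).
by exists (F ^+ k * e); rewrite hp; rewrite mulrA.
Qed.

Lemma unitR_d a k n : unitS a -> unitR F (fracS (a * F ^+ k) / Fr ^+ n).
Proof.
move=> ha; apply: (@unitR_div _ _ k); exists a^-1.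
by rewrite mulrAC mulrV // mul1r.
Qed.

Lemma coprimeR_of p q : p != 0 -> coprimeS p q -> coprimeR F (fracS p) (fracS q).
Proof.
move=> p0 hpq d hd h1 h2.
have d0 : d != 0.
  apply/eqP => e; move: h1 => [c [_ ec]]; move/eqP: p0; apply.
  by apply: fracS_inj; rewrite ec e mul0r fracS0.
have [a [k [n [ha ed]]]] := rep_d hd d0.
rewrite ed in h1 h2 *; apply: unitR_d; apply: hpq; [exact: (dvdR_S ha h1)|exact: (dvdR_S ha h2)].
Qed.

Lemma dvd_big_ord n (f : 'I_n -> S) i : dvdS (f i) (\prod_j f j).
Proof. by rewrite (bigD1 i) //; apply: dvd_mulr; apply: dvd_refl. Qed.

Lemma dirA x es : factorization x es -> ~ dvdS F x -> factR F (fracS x) es.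
Proof.
move=> [u [ps [hu [hsz [hirr [hcop [h1 [_ ex]]]]]]]] hFx.
have hFp : forall i, (i < size ps)%N -> ~ dvdS F (nth 0 ps i).
  move=> i hi hd; apply: hFx; apply: (dvd_trans hd); rewrite ex; apply: dvd_mull.
  apply: (dvd_trans _ (dvd_big_ord (fun j : 'I_(size ps) => nth 0 ps j ^+ nth 0%N es j) (Ordinal hi))).
  by apply: dvd_exp; apply: h1; rewrite -hsz.
exists (fracS u), (map (@fracS S) ps); split; first exact: unitR_unitS.
rewrite size_map; split => //; split.
  by move=> i hi; rewrite (nth_map 0) //; apply: irrR_of_irr; [apply: hirr|apply: hFp].
split.
  move=> i j hi hj ne; rewrite !(nth_map 0) //; apply: coprimeR_of; last exact: hcop.
  exact: irr_neq0 (hirr i hi).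
rewrite ex fracSM fracS_prod; congr (_ * _); apply: eq_bigr => i _.
by rewrite fracSX (nth_map 0).
Qed.

Lemma irrR_rep q : irrR F q -> exists b (j : int),
  irreducibleS b /\ ~ dvdS F b /\ q = fracS b * Fr ^ j.
Proof.
move=> [[a [n eq]] [q0 [qu hsplit]]].
have a0 : a != 0 by apply: contraNneq q0 => e; rewrite eq e fracS0 mul0r.
have [m [b [ea hb]]] := extract hS hF a0.
have eq' : q = fracS b * Fr ^ (m%:Z - n%:Z).
  by rewrite eq ea fracSM fracSX (mulrC (Fr ^+ m)) -mulrA Frz_split.
exists b, (m%:Z - n%:Z); split; last by split.
have b0 : b != 0 by apply: contraNneq a0 => e; rewrite ea e mulr0.
split => //; split.
  move=> hu; apply: qu; rewrite eq'; apply: unitRM; first exact: unitR_unitS.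
  exact: unitR_Frz.
move=> c d ebcd.
have hFc : ~ dvdS F c by move=> h; apply: hb; rewrite ebcd; apply: dvd_mulr.
have hFd : ~ dvdS F d by move=> h; apply: hb; rewrite ebcd; apply: dvd_mull.
have : q = fracS c * (fracS d * Fr ^ (m%:Z - n%:Z)) by rewrite eq' ebcd fracSM mulrA.
case/hsplit.
- exact: in_loc_S.
- by apply: in_locM; [apply: in_loc_S|apply: in_loc_Frz].
- by move=> h; left; apply: unitR_S.
move=> h; right; apply: unitR_S => //.
have -> : fracS d = fracS d * Fr ^ (m%:Z - n%:Z) * Fr ^ (- (m%:Z - n%:Z)).
  by rewrite -mulrA -expfzDr ?Fr0 // subrr expr0z mulr1.
by apply: unitRM => //; apply: unitR_Frz.
Qed.

Lemma dirB x es : factR F (fracS x) es -> ~ dvdS F x ->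
  (forall i, (i < size es)%N -> (1 <= nth 0%N es i)%N) -> sorted leq es ->
  factorization x es.
Proof.
move=> [w [qs [hw [hsz [hirr [hcop ex]]]]]] hFx h1 hso.
set n := size qs in hirr hcop ex hsz.
pose P i b := exists j : int, irreducibleS b /\ ~ dvdS F b /\ nth 0 qs i = fracS b * Fr ^ j.
pose bf i := epsilon (inhabits (0:S)) (P i).
have hbf : forall i, (i < n)%N -> P i (bf i).
  move=> i hi; apply: epsilon_spec; exact: irrR_rep (hirr i hi).
pose jf i := epsilon (inhabits (0:int)) (fun j => nth 0 qs i = fracS (bf i) * Fr ^ j).
have hjf : forall i, (i < n)%N -> nth 0 qs i = fracS (bf i) * Fr ^ (jf i).
  move=> i hi; have [j [_ [_ e]]] := hbf i hi.
  exact: (epsilon_spec (inhabits (0:int)) (fun j => nth 0 qs i = fracS (bf i) * Fr ^ j) (ex_intro _ j e)).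
pose ps := mkseq bf n.
have hps : forall i, (i < n)%N -> nth 0 ps i = bf i by move=> i hi; rewrite nth_mkseq.
have hszp : size ps = n by rewrite size_mkseq.
pose w' := w * \prod_(i < n) (Fr ^ (jf i)) ^+ nth 0%N es i.
have hw' : unitR F w'.
  apply: unitRM => //; apply: unitR_prod => i _; apply: unitRX; exact: unitR_Frz.
have [v [J [hv ew']]] := unitR_rep hw'.
pose B := \prod_(i < n) bf i ^+ nth 0%N es i.
have e2 : \prod_(i < n) nth 0 qs i ^+ nth 0%N es i =
          fracS B * \prod_(i < n) (Fr ^ jf i) ^+ nth 0%N es i.
  by rewrite /B fracS_prod -big_split; apply: eq_bigr => i _; rewrite hjf // exprMn fracSX.
have exB : fracS x = fracS (v * B) * Fr ^ J.
  by rewrite ex e2 fracSM mulrCA -/w' ew' mulrA (mulrC (fracS B)).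
have hFB : ~ dvdS F (v * B).
  case/(irr_prime hS hF) => [/(irr_ndvd_unit hF hv)//|].
  case/(prime_dvd_big hS hF) => i [_ /(prime_dvd_exp hS hF)].
  by have [j [_ [hb _]]] := hbf i (ltn_ord i).
have J0 := Fr_int0 hFx hFB exB.
have exS : x = v * B by move: exB; rewrite J0 expr0z mulr1 => /fracS_inj.
exists v, ps; split => //; split; first by rewrite hszp.
split.
  move=> i; rewrite hszp => hi; rewrite hps //; have [j [hb _]] := hbf i hi; exact: hb.
split.
  move=> i j; rewrite hszp => hi hj ne; rewrite !hps // => d [c ec] [c' ec'].
  have hd1 : dvdR F (fracS d) (nth 0 qs i).
    exists (fracS c * Fr ^ (jf i)); split; first by apply: in_locM; [apply: in_loc_S|apply: in_loc_Frz].
    by rewrite hjf // ec fracSM mulrA.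
  have hd2 : dvdR F (fracS d) (nth 0 qs j).
    exists (fracS c' * Fr ^ (jf j)); split; first by apply: in_locM; [apply: in_loc_S|apply: in_loc_Frz].
    by rewrite hjf // ec' fracSM mulrA.
  apply: unitR_S; first exact: (hcop i j hi hj ne (fracS d) (in_loc_S F d) hd1 hd2).
  move=> hFd; have [k [_ [hb _]]] := hbf i hi; apply: hb; rewrite ec; exact: dvd_mulr.
split => //; split => //.
rewrite exS /B; congr (_ * _).
rewrite -(big_mkord xpredT (fun i => bf i ^+ nth 0%N es i)).
rewrite -(big_mkord xpredT (fun i => nth 0 ps i ^+ nth 0%N es i)) hszp.
by apply: eq_big_nat => i /andP[_ hi]; rewrite hps.
Qed.

End Irr.


Section Part2.
Variable S : idomainType.
Hypothesis hS : is_UFD S.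
Variables F F' : S.
Hypothesis hF : irreducibleS F.
Hypothesis hF' : irreducibleS F'.
Variable D : {fraction S} -> {fraction S}.
Hypothesis hD : loc_ring_iso F F' D.
Hypothesis hDU : preserves_units D.
Local Notation Fr := (fracS F).
Local Notation Fp := (fracS F').
Let hF0 : F != 0 := irr_neq0 hF.
Let hF'0 : F' != 0 := irr_neq0 hF'.

Lemma unit_int_eq (u1 u2 : S) (a b : int) : unitS u1 -> unitS u2 ->
  fracS u1 * Fp ^ a = fracS u2 * Fp ^ b -> a = b.
Proof.
move=> h1 h2 e.
have e' : fracS u1 = fracS u2 * Fp ^ (b - a).
  rewrite expfzDr ?Fr0 // mulrA -e -mulrA -expfzDr ?Fr0 // subrr expr0z mulr1 //.
have := Fr_int0 hF' (irr_ndvd_unit hF' h1) (irr_ndvd_unit hF' h2) e'.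
by move/eqP; rewrite subr_eq0 => /eqP.
Qed.

Lemma fracS_unit_z (v : S) (l : int) : unitS v -> exists w, unitS w /\ fracS v ^ l = fracS w.
Proof.
move=> hv; case: l => n.
  by exists (v ^+ n); rewrite -exprnP -fracSX; split => //; apply: unitSX.
exists ((v ^+ n.+1)^-1); split; first by apply: unitSV; apply: unitSX.
by rewrite NegzE -exprnN fracSV ?fracSX //; apply: unitSX.
Qed.

Lemma DFr_form : exists v0 (j0 : int), unitS v0 /\ (j0 = 1 \/ j0 = -1) /\ D Fr = fracS v0 * Fp ^ j0.
Proof.
have hU := D_unitR hD (unitR_Fr hF0).
have [v0 [j0 [hv0 e0]]] := unitR_rep hS hF' hU.
exists v0, j0; split => //; split => //.
have [z [hz ez]] := hD.2.2.2.2.2 Fp (in_loc_S F' F').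
have hzU : unitR F z.
  by apply: (D_unitR_back hD hz); rewrite ez; exact: unitR_Fr hF'0.
have [v2 [l [hv2 e2]]] := unitR_rep hS hF hzU.
have [v2' [hv2' e2']] := hDU.1 v2 hv2.
have [w [hw ew]] := fracS_unit_z l hv0.
have : fracS 1 * Fp ^ 1 = fracS (v2' * w) * Fp ^ (j0 * l).
  rewrite fracS1 mul1r expr1z -{1}ez e2 hD.2.2.1; first last.
  - exact: in_loc_Frz.
  - exact: in_loc_S.
  rewrite e2' (DZ hD _ (unitR_Fr hF0)) e0 expfzMl ew exprz_exp fracSM mulrA //.
move/(unit_int_eq unitS1 (unitSM hv2' hw)) => e1.
have : j0 \is a intUnitRing.unitz by apply: (@intUnitRing.unitzPl _ l); rewrite mulrC -e1.
by rewrite qualifE => /orP[] /eqP ->; [left|right].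
Qed.

Definition cf (C : S) := epsilon (inhabits (0:S)) (fun c => D (fracS C) = fracS c).

Lemma hcf C : unitS C -> unitS (cf C) /\ D (fracS C) = fracS (cf C).
Proof.
move=> hC; have [v [hv ev]] := hDU.1 C hC.
have e : D (fracS C) = fracS (cf C).
  by apply: (epsilon_spec (inhabits (0:S)) (fun c => D (fracS C) = fracS c)); exists v.
split => //; suff -> : cf C = v by [].
by apply: fracS_inj; rewrite -e.
Qed.

Lemma cf_inj C1 C2 : unitS C1 -> unitS C2 -> cf C1 = cf C2 -> C1 = C2.
Proof.
move=> h1 h2 e; apply: fracS_inj; apply: hD.2.2.2.2.1; try exact: in_loc_S.
by rewrite (hcf h1).2 (hcf h2).2 e.
Qed.

Lemma cf_surj c : unitS c -> exists C, unitS C /\ cf C = c.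
Proof.
move=> hc; have [u [hu eu]] := hDU.2 c hc.
by exists u; split => //; apply: fracS_inj; rewrite -(hcf hu).2.
Qed.

Lemma Theta_ex : exists Theta : S -> S,
  (forall C, unitS C -> unitS (Theta C)) /\
  (forall C1 C2, unitS C1 -> unitS C2 -> Theta C1 = Theta C2 -> C1 = C2) /\
  (forall C', unitS C' -> exists C, unitS C /\ Theta C = C') /\
  (forall C, unitS C -> exists w, unitR F' w /\ D (fracS (F - C)) = w * fracS (F' - Theta C)).
Proof.
have [v0 [j0 [hv0 [hj0 e0]]]] := DFr_form.
have hDiff : forall C, unitS C -> D (fracS (F - C)) = D Fr - fracS (cf C).
  by move=> C hC; rewrite fracSB (DB hD) ?(hcf hC).2 //; apply: in_loc_S.
case: hj0 => hj; rewrite hj in e0.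
  exists (fun C => cf C * v0^-1); split.
    by move=> C hC; apply: unitSM; [apply: (hcf hC).1|apply: unitSV].
  split.
    move=> C1 C2 h1 h2 e; apply: cf_inj => //; exact: (mulIr (unitSV hv0) e).
  split.
    move=> C' hC'; have [C [hC eC]] := cf_surj (unitSM hC' hv0).
    by exists C; split => //; rewrite eC mulrK.
  move=> C hC; exists (fracS v0); split; first exact: unitR_unitS.
  rewrite hDiff // e0 expr1z -fracSM -fracSB -fracSM; congr fracS.
  by rewrite mulrBr mulrCA mulrV // mulr1.
exists (fun C => v0 * (cf C)^-1); split.
  by move=> C hC; apply: unitSM => //; apply: unitSV; apply: (hcf hC).1.
split.
  move=> C1 C2 h1 h2 e; apply: cf_inj => //; apply: invr_inj; exact: (mulrI hv0 e).
split.
  move=> C' hC'; have [C [hC eC]] := cf_surj (unitSM hv0 (unitSV hC')).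
  exists C; split => //; rewrite eC invrM ?invrK //; last exact: unitSV.
  by rewrite mulrCA mulrV // mulr1.
move=> C hC; have [hc ec] := hcf hC; set c := cf C in hc ec *.
have c0 : fracS c != 0 by apply: unitR_neq0 (unitR_unitS F' hc).
have Fp0 : Fp != 0 := Fr0 hF'0.
exists (- fracS c / Fp); split.
  rewrite mulNr; apply: unitRN; apply: unitRM; first exact: unitR_unitS.
  exact: unitRV (unitR_Fr hF'0).
rewrite hDiff // e0 fracSB fracSM fracSV //.
have -> : Fp ^ (-1) = Fp^-1 by rewrite -exprnN expr1.
rewrite /c in c0 *; rewrite mulrBr divfK // !mulNr opprK addrC; congr (_ + _).
by rewrite mulf_div (mulrC (fracS (cf C))) -mulf_div divff // mulr1.
Qed.

Lemma factR_unit (y w : {fraction S}) es : factR F' (w * y) es -> unitR F' w -> factR F' y es.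
Proof.
move=> [w0 [qs [hw0 [hsz [hirr [hcop ex]]]]]] hw.
exists (w^-1 * w0), qs; split; first by apply: unitRM => //; apply: unitRV.
do 3 (split => //).
by rewrite -mulrA -ex mulKf //; apply: unitR_neq0 hw.
Qed.

Lemma dvdB (d a b : S) : dvdS d a -> dvdS d b -> dvdS d (a - b).
Proof. by move=> [x ->] [y ->]; exists (x - y); rewrite mulrBr. Qed.

Lemma part2 : exists Theta : S -> S,
     (forall C, unitS C -> unitS (Theta C)) /\
     (forall C1 C2, unitS C1 -> unitS C2 -> Theta C1 = Theta C2 -> C1 = C2) /\
     (forall C', unitS C' -> exists C, unitS C /\ Theta C = C') /\
     (forall C, unitS C -> forall es es' : seq nat,
        factorization (F - C) es -> factorization (F' - Theta C) es' ->
        size es = size es' /\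
        (forall i, (1 <= i <= size es)%N -> nth 0%N es i.-1 = nth 0%N es' i.-1)).
Proof.
have [Th [hu [hinj [hsurj hw]]]] := Theta_ex.
exists Th; do 3 (split => //).
move=> C hC es es' hf hf'.
suff -> : es = es' by [].
have hnd : forall (G K : S), irreducibleS G -> unitS K -> ~ dvdS G (G - K).
  move=> G K hG hK hd; apply: (irr_nunit hG); apply: (dvd_unit _ hK).
  have -> : K = G - (G - K) by rewrite opprB addrC subrK.
  by apply: dvdB => //; apply: dvd_refl.
have h1 := dirA hS hF hf (hnd _ _ hF hC).
have h2 := D_factR hD h1.
have [w [hwU ew]] := hw C hC.
rewrite ew in h2.
have h3 := factR_unit h2 hwU.
have [_ [_ [_ [_ [_ [_ [hge1 [hso _]]]]]]]] := hf.
have h4 := dirB hS hF' h3 (hnd _ _ hF' (hu C hC)) hge1 hso.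
have := fact_uniq hS h4 hf'. done.
Qed.

End Part2.


Section SLemmas.
Variable S : idomainType.
Hypothesis hS : is_UFD S.

Lemma parity_lemma (p m u : S) k a : irreducibleS p -> ~ dvdS p m -> unitS u ->
  p ^+ k * m = u * a ^+ 2 -> ~~ odd k.
Proof.
move=> hp hm hu; have p0 := irr_neq0 hp.
elim: k {-2}k (leqnn k) a => [|N IH] k hk a.
  by move: hk; rewrite leqn0 => /eqP ->.
case: k hk => [//|k] hk e.
have : dvdS p (u * a ^+ 2) by rewrite -e exprS -mulrA; apply: dvd_mulr; apply: dvd_refl.
case/(irr_prime hS hp) => [/(irr_ndvd_unit hp hu)//|/(prime_dvd_exp hS hp) [a' ea]].
case: k hk e => [|k] hk e.
  case: hm; exists (u * a' ^+ 2); apply: (mulfI p0).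
  by move: e; rewrite expr1 ea => ->; ring.
rewrite /= negbK.
apply: (IH k _ a'); first by rewrite -ltnS ltnW.
apply: (mulfI (expf_neq0 2 p0)); rewrite mulrA -exprD addnC addn2 e ea; ring.
Qed.

Lemma split_prime_pow (p a b : S) E : irreducibleS p -> dvdS a (b * p ^+ E) ->
  exists a1 k, a = a1 * p ^+ k /\ dvdS a1 b.
Proof.
move=> hp; have p0 := irr_neq0 hp.
elim: E a => [|E IH] a; first by rewrite expr0 mulr1 => h; exists a, 0%N; rewrite expr0 mulr1.
move=> [c ec].
have : dvdS p (a * c) by rewrite -ec exprS mulrCA; apply: dvd_mulr; apply: dvd_refl.
case/(irr_prime hS hp) => [[a' ea]|[c' ec']].
  have : dvdS a' (b * p ^+ E).
    by exists c; apply: (mulfI p0); rewrite mulrCA -exprS ec ea; ring.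
  by case/IH => a1 [k [e1 h1]]; exists a1, k.+1; split => //; rewrite ea e1 exprS; ring.
apply: IH; exists c'; apply: (mulfI p0); rewrite mulrCA -exprS ec ec'; ring.
Qed.

Lemma div_prod_rep (f : nat -> S) (E : nat -> nat) Q a :
  (forall j, (j < Q)%N -> irreducibleS (f j)) ->
  dvdS a (\prod_(0 <= j < Q) f j ^+ E j) ->
  exists v (kv : nat -> nat), unitS v /\ a = v * \prod_(0 <= j < Q) f j ^+ kv j.
Proof.
elim: Q a => [|Q IH] a hf.
  rewrite big_geq // => h; exists a, (fun _ => 0%N); split; first exact: dvd_unit h unitS1.
  by rewrite big_geq // mulr1.
rewrite big_nat_recr //= => h.
have [a1 [k [ea h1]]] := split_prime_pow (hf Q (ltnSn Q)) h.
have [v [kv [hv e1]]] := IH a1 (fun j hj => hf j (ltnW hj)) h1.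
exists v, (fun j => if j == Q then k else kv j); split => //.
rewrite big_nat_recr //= eqxx ea e1 -mulrA; congr (_ * (_ * _)).
by apply: eq_big_nat => j /andP[_ hj]; rewrite ltn_eqF.
Qed.

Lemma dvd_prod_prod (I : Type) (r : seq I) (P : pred I) (f g : I -> S) :
  (forall i, P i -> dvdS (f i) (g i)) ->
  dvdS (\prod_(i <- r | P i) f i) (\prod_(i <- r | P i) g i).
Proof.
move=> h; elim: r => [|x r IH]; first by rewrite !big_nil; apply: dvd_refl.
rewrite !big_cons; case: ifP => // Px.
by have [c ->] := h x Px; have [d ->] := IH; exists (c * d); ring.
Qed.

End SLemmas.

Definition dep (S : idomainType) (F : S) K (g : 'I_K -> {fraction S}) :=
  exists T1 T2 : {ffun 'I_K -> bool}, T1 != T2 /\ exists u h, unitS u /\ unitR F h /\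
    (\prod_(i | T1 i) g i) * (\prod_(i | T2 i) g i) = fracS u * h ^+ 2.

Section FracGen.
Variable S : idomainType.
Variable F : S.
Hypothesis hF0 : F != 0.
Local Notation Fr := (fracS F).

Lemma prod_frac (I : Type) (r : seq I) (P : pred I) (a : I -> S) (n : I -> nat) :
  \prod_(i <- r | P i) (fracS (a i) / Fr ^+ n i) =
  fracS (\prod_(i <- r | P i) a i) / Fr ^+ (\sum_(i <- r | P i) n i).
Proof.
elim: r => [|x r IH]; first by rewrite !big_nil fracS1 expr0 divr1.
rewrite !big_cons; case: ifP => // _.
by rewrite IH mul_div_loc.
Qed.

Lemma frac_eq_ext x y k n : x * F ^+ k = y -> fracS x / Fr ^+ n = fracS y / Fr ^+ (n + k).
Proof.
move=> <-; rewrite fracSM fracSX exprD invfM mulrACA divff ?mulr1 //.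
exact: FrX0.
Qed.

Lemma unitR_div_gen b c N m : b * c = F ^+ N -> unitR F (fracS b / Fr ^+ m).
Proof.
move=> e; split; first exact: in_loc_div.
exists (fracS (c * F ^+ m) / Fr ^+ N); split; first exact: in_loc_div.
rewrite mul_div_loc mulrA e -exprD addnC fracSX divff //; exact: FrX0.
Qed.

End FracGen.

Section DepTrans.
Variable S : idomainType.
Variables F F' : S.
Variable D : {fraction S} -> {fraction S}.
Hypothesis hD : loc_ring_iso F F' D.
Hypothesis hDU : preserves_units D.

Lemma dep_ext K (g g' : 'I_K -> {fraction S}) : (forall i, g i = g' i) -> dep F g -> dep F g'.
Proof.
move=> e [T1 [T2 [ne [u [h [hu [hh eq]]]]]]].
exists T1, T2; split => //; exists u, h; split => //; split => //.
by rewrite -eq; congr (_ * _); apply: eq_bigr => i _; rewrite e.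
Qed.

Lemma dep_fwd K (g : 'I_K -> {fraction S}) : (forall i, in_loc F (g i)) ->
  dep F g -> dep F' (fun i => D (g i)).
Proof.
move=> hg [T1 [T2 [ne [u [h [hu [hh eq]]]]]]].
have [v [hv ev]] := hDU.1 u hu.
have hin1 : forall T : {ffun 'I_K -> bool}, in_loc F (\prod_(i | T i) g i).
  by move=> T; apply: in_loc_prod.
exists T1, T2; split => //; exists v, (D h); split => //; split; first exact: (D_unitR hD hh).
rewrite -!(Dprod hD) //; rewrite -hD.2.2.1 // eq hD.2.2.1; first last.
- by apply: in_locX; case: hh.
- exact: in_loc_S.
by rewrite ev (DX hD) //; case: hh.
Qed.

Lemma dep_bwd K (g : 'I_K -> {fraction S}) : (forall i, in_loc F (g i)) ->
  dep F' (fun i => D (g i)) -> dep F g.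
Proof.
move=> hg [T1 [T2 [ne [u' [h' [hu' [hh' eq]]]]]]].
have [u [hu eu]] := hDU.2 u' hu'.
have [h [hh eh]] := hD.2.2.2.2.2 h' hh'.1.
have hhU : unitR F h by apply: (D_unitR_back hD hh); rewrite eh.
exists T1, T2; split => //; exists u, h; split => //; split => //.
have hin1 : forall T : {ffun 'I_K -> bool}, in_loc F (\prod_(i | T i) g i).
  by move=> T; apply: in_loc_prod.
apply: hD.2.2.2.2.1.
- exact: in_locM.
- by apply: in_locM; [apply: in_loc_S|apply: in_locX].
rewrite !hD.2.2.1 //; last by apply: in_locX.
- by rewrite !(Dprod hD) // eq eu eh expr2.
- exact: in_loc_S.
Qed.

End DepTrans.

Section Rank.
Variable S : idomainType.
Hypothesis hS : is_UFD S.
Variables (F uF : S) (ps : seq S) (es : seq nat).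
Hypothesis hF0 : F != 0.
Hypothesis hfd : fdata F uF ps es.
Hypothesis hge1 : forall i, (i < size es)%N -> (1 <= nth 0%N es i)%N.
Local Notation Fr := (fracS F).
Local Notation Q := (size ps).
Local Notation P j := (nth 0 ps j).

Let hirr : forall i, (i < Q)%N -> irreducibleS (P i) := hfd.2.2.1.
Let hcop := hfd.2.2.2.1.
Let huF : unitS uF := hfd.1.
Let eF : F = uF * \prod_(i < Q) P i ^+ nth 0%N es i := hfd.2.2.2.2.

Lemma ndvd_rest (i0 : 'I_Q) (w : S) (c : 'I_Q -> nat) : unitS w ->
  ~ dvdS (P i0) (w * \prod_(i < Q | i != i0) P i ^+ c i).
Proof.
move=> hw; have hp := hirr (ltn_ord i0).
case/(irr_prime hS hp) => [/(irr_ndvd_unit hp hw)//|].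
case/(prime_dvd_big hS hp) => j [hj /(prime_dvd_exp hS hp) hpj].
apply: (irr_nunit hp).
have ne : (i0 : nat) <> j by move=> e; move: hj; rewrite -val_eqE /= e eqxx.
exact: (hcop (ltn_ord i0) (ltn_ord j) ne (dvd_refl _) hpj).
Qed.

Lemma P_dvd_F (i : 'I_Q) : dvdS (P i) F.
Proof.
rewrite eF; apply: dvd_mull.
apply: (dvd_trans _ (dvd_big_ord (fun j : 'I_Q => P j ^+ nth 0%N es j) i)).
by apply: dvd_exp; apply: hge1; rewrite -hfd.2.1.
Qed.

Lemma unitR_P (i : 'I_Q) : unitR F (fracS (P i)).
Proof.
have [c ec] := P_dvd_F i.
have := @unitR_div_gen _ F hF0 (P i) c 1 0; rewrite expr1 expr0 divr1; apply.
by rewrite ec.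
Qed.

Lemma indep_P : ~ dep F (fun i : 'I_Q => fracS (P i)).
Proof.
move=> [T1 [T2 [ne [u [h [hu [hh eq]]]]]]].
have [i0 hi0] : exists i0, T1 i0 != T2 i0.
  case: (classic (exists i0, T1 i0 != T2 i0)) => // hn; case/negP: ne.
  apply/eqP/ffunP => i; apply/eqP; apply/negP => hi; apply: hn; exists i; exact/negP.
have [a [n eh]] := hh.1.
have eqS : (\prod_(i | T1 i) P i * \prod_(i | T2 i) P i) * F ^+ (n + n) = u * a ^+ 2.
  apply: (clear_den hF0); rewrite fracSM !fracS_prod eq eh expr_div_n.
  by rewrite fracSM fracSX addnn -muln2 exprM mulrA.
have pT : forall T : {ffun 'I_Q -> bool}, \prod_(i | T i) P i = \prod_(i < Q) P i ^+ T i.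
  move=> T; rewrite big_mkcond; apply: eq_bigr => i _.
  by case: (T i); rewrite ?expr1 ?expr0.
have eF' : F ^+ (n + n) = uF ^+ (n + n) * \prod_(i < Q) P i ^+ (nth 0%N es i * (n + n)).
  rewrite {1}eF exprMn -prodrXl; congr (_ * _); apply: eq_bigr => i _; by rewrite exprM.
pose c := fun i : 'I_Q => (T1 i + T2 i + nth 0%N es i * (n + n))%N.
have E2 : (\prod_(i | T1 i) P i * \prod_(i | T2 i) P i) * F ^+ (n + n) =
          uF ^+ (n + n) * \prod_(i < Q) P i ^+ c i.
  rewrite !pT eF' mulrCA -!big_split; congr (_ * _); apply: eq_bigr => i _.
  by rewrite /= -!exprD.
rewrite E2 (bigD1 i0) //= mulrCA in eqS.
have hpar := parity_lemma hS (hirr (ltn_ord i0)) (@ndvd_rest i0 _ c (unitSX (n + n) huF)) hu eqS.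
move: hpar.
have hodd : odd (c i0).
  rewrite /c !oddD oddM addnn odd_double andbF addbF !oddb.
  by move: hi0; case: (T1 i0); case: (T2 i0).
by rewrite hodd.
Qed.

Let eFn : F = uF * \prod_(0 <= j < Q) P j ^+ nth 0%N es j.
Proof. by rewrite {1}eF big_mkord. Qed.

Lemma eFN N : F ^+ N = uF ^+ N * \prod_(0 <= j < Q) P j ^+ (nth 0%N es j * N).
Proof.
rewrite {1}eFn exprMn -prodrXl; congr (_ * _); apply: eq_bigr => j _; by rewrite exprM.
Qed.

Lemma unitR_rep_gen z : unitR F z -> exists v (kv : nat -> nat) n, unitS v /\
  z = fracS (v * \prod_(0 <= j < Q) P j ^+ kv j) / Fr ^+ n.
Proof.
move=> [[a [n ez]] [w [[b [m ew]] e]]].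
move: e; rewrite ez ew mul_div_loc => e.
have e' : a * b = F ^+ (n + m).
  apply: fracS_inj; have := divfK (FrX0 hF0 (n + m)) (fracS (a * b)).
  by rewrite e mul1r fracSX => <-.
have hd : dvdS a (\prod_(0 <= j < Q) P j ^+ (nth 0%N es j * (n + m))).
  exists (b * uF ^- (n + m)); rewrite mulrA e' eFN mulrAC mulrV ?mul1r //.
  exact: unitSX.
have [v [kv [hv eav]]] := div_prod_rep hS (fun j hj => hirr hj) hd.
by exists v, kv, n; split => //; rewrite eav.
Qed.

Lemma unitS_prod (I : Type) (r : seq I) (Pr : pred I) (f : I -> S) :
  (forall i, Pr i -> unitS (f i)) -> unitS (\prod_(i <- r | Pr i) f i).
Proof.
move=> h; apply: (big_ind (fun x => unitS x)) => //; first exact: unitS1.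
exact: unitSM.
Qed.

Lemma dvd_prod_nat (r : seq nat) (f g : nat -> S) :
  (forall i, i \in r -> dvdS (f i) (g i)) ->
  dvdS (\prod_(i <- r) f i) (\prod_(i <- r) g i).
Proof.
elim: r => [|x r IH] h; first by rewrite !big_nil; apply: dvd_refl.
rewrite !big_cons; have [c ->] := h x (mem_head _ _).
have [d ->] := IH (fun i hi => h i (@mem_behead _ (x :: r) _ hi)).
by exists (c * d); ring.
Qed.

Lemma dep_upper K (g : 'I_K -> {fraction S}) : (Q < K)%N -> (forall i, unitR F (g i)) -> dep F g.
Proof.
move=> hK hg.
pose Pt i (t : S * (nat -> nat) * nat) := unitS t.1.1 /\
  g i = fracS (t.1.1 * \prod_(0 <= j < Q) P j ^+ t.1.2 j) / Fr ^+ t.2.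
pose rp i := epsilon (inhabits (0 : S, fun _ : nat => 0%N, 0%N)) (Pt i).
have hrp : forall i, Pt i (rp i).
  move=> i; apply: epsilon_spec.
  have [v [kv [n [hv e]]]] := unitR_rep_gen (hg i).
  by exists (v, kv, n).
pose v i := (rp i).1.1.
pose kv i := (rp i).1.2.
pose nn i := (rp i).2.
pose KT (T : {ffun 'I_K -> bool}) j := (\sum_(i | T i) kv i j)%N.
pose NT (T : {ffun 'I_K -> bool}) := (\sum_(i | T i) nn i)%N.
pose VT (T : {ffun 'I_K -> bool}) := \prod_(i | T i) v i.
have prodT : forall T : {ffun 'I_K -> bool}, \prod_(i | T i) g i =
    fracS (VT T * \prod_(0 <= j < Q) P j ^+ KT T j) / Fr ^+ NT T.
  move=> T; rewrite (eq_bigr _ (fun i _ => (hrp i).2)) prod_frac.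
  congr (fracS _ / _); rewrite big_split /=; congr (_ * _).
  rewrite (exchange_big _ _ (index_iota 0 Q)) /=; apply: eq_bigr => j _.
  by rewrite prodrXr.
pose phi (T : {ffun 'I_K -> bool}) := [ffun j : 'I_Q => odd (KT T j + NT T * nth 0%N es j)].
have [T1 [T2 [ephi ne]]] : exists T1 T2, phi T1 = phi T2 /\ T1 <> T2.
  apply: NNPP => hn.
  have hinj : injective phi.
    move=> x y exy; apply: NNPP => nxy; apply: hn; by exists x, y.
  have := @leq_card _ _ phi hinj; rewrite !card_ffun !card_ord card_bool leq_exp2l //.
  by rewrite leqNgt hK.
exists T1, T2; split; first by apply/eqP.
pose N := (NT T1 + NT T2)%N.
pose c j := (KT T1 j + KT T2 j)%N.
pose M j := ((c j + N * nth 0%N es j)./2)%N.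
have hev : forall j, (j < Q)%N -> (M j * 2 = c j + N * nth 0%N es j)%N.
  move=> j hj; rewrite muln2 even_halfK //.
  have := congr1 (fun f : {ffun 'I_Q -> bool} => f (Ordinal hj)) ephi; rewrite !ffunE /= => eo.
  rewrite /c /N mulnDl addnACA oddD eo; by case: odd.
pose b := \prod_(0 <= j < Q) P j ^+ M j.
exists (VT T1 * VT T2 * uF ^+ N), (fracS b / Fr ^+ N).
split; first by apply: unitSM; [apply: unitSM; apply: unitS_prod => i _; exact: (hrp i).1|apply: unitSX].
split.
  have : dvdS b (F ^+ (\sum_(0 <= j < Q) M j)).
    rewrite -prodrXr; apply: dvd_prod_nat => j; rewrite mem_index_iota => /andP[_ hj].
    by apply: dvd_exp2; exact: (P_dvd_F (Ordinal hj)).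
  by move=> [c' ec']; apply: (@unitR_div_gen _ F hF0 b c' _ N (esym ec')).
rewrite !prodT mul_div_loc expr_div_n -(fracSX b 2) -exprM muln2 -addnn [RHS]mulrA -fracSM.
apply: (frac_eq_ext hF0).
have eX : \prod_(0 <= j < Q) P j ^+ KT T1 j * \prod_(0 <= j < Q) P j ^+ KT T2 j *
          \prod_(0 <= j < Q) P j ^+ (nth 0%N es j * N) = b ^+ 2.
  rewrite -!big_split -prodrXl; apply: eq_big_nat => j /andP[_ hj] /=.
  by rewrite -!exprD -exprM hev // /c mulnC.
rewrite eFN -eX.
move: (VT T1) (VT T2) (uF ^+ N) (\prod_(0 <= j < Q) P j ^+ KT T1 j) (\prod_(0 <= j < Q) P j ^+ KT T2 j) (\prod_(0 <= j < Q) P j ^+ (nth 0%N es j * N)) => a1 a2 a3 a4 a5 a6; ring.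
Qed.

End Rank.

Lemma part1 (S : idomainType) (hS : is_UFD S) (F F' : S) (hF0 : F != 0) (hF'0 : F' != 0)
  (D : {fraction S} -> {fraction S}) (hD : loc_ring_iso F F' D) (hDU : preserves_units D)
  es es' : factorization F es -> factorization F' es' -> size es = size es'.
Proof.
move=> [u [ps [hu [hsz [hirr [hcop [h1 [hso ex]]]]]]]].
move=> [u' [ps' [hu' [hsz' [hirr' [hcop' [h1' [hso' ex']]]]]]]].
have hfd : fdata F u ps es by [].
have hfd' : fdata F' u' ps' es' by [].
rewrite -hsz -hsz'; apply/eqP; rewrite eqn_leq; apply/andP; split.
  rewrite leqNgt; apply/negP => hlt.
  apply: (indep_P hS hF0 hfd).
  apply: (dep_bwd hD hDU); first by move=> i; case: (unitR_P hF0 hfd h1 i).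
  apply: (dep_upper hS hF'0 hfd' h1' hlt) => i.
  exact: (D_unitR hD (unitR_P hF0 hfd h1 i)).
rewrite leqNgt; apply/negP => hlt.
pose g' := fun j : 'I_(size ps') => fracS (nth 0 ps' j).
pose g := fun j => epsilon (inhabits (0 : {fraction S})) (fun z => in_loc F z /\ D z = g' j).
have hg : forall j, in_loc F (g j) /\ D (g j) = g' j.
  move=> j; apply: (epsilon_spec (inhabits (0 : {fraction S})) (fun z => in_loc F z /\ D z = g' j)).
  apply: hD.2.2.2.2.2; exact: in_loc_S.
apply: (indep_P hS hF'0 hfd').
apply: (@dep_ext _ F' _ (fun j => D (g j)) (fun i : 'I_(size ps') => fracS (nth 0 ps' i))); first by move=> j; rewrite (hg j).2.
apply: (dep_fwd hD hDU); first by move=> j; case: (hg j).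
apply: (dep_upper hS hF0 hfd h1 hlt) => j.
apply: (D_unitR_back hD (hg j).1); rewrite (hg j).2.
exact: (unitR_P hF'0 hfd' h1' j).
Qed.


Theorem mainTheorem18 (S : idomainType) (hS : is_UFD S) (F F' : S)
  (hF0 : F != 0) (hFu : ~ unitS F) (hF'0 : F' != 0) (hF'u : ~ unitS F')
  (D : {fraction S} -> {fraction S})
  (hD : loc_ring_iso F F' D) (hDU : preserves_units D) :
  (forall es es' : seq nat, factorization F es -> factorization F' es' ->
     size es = size es') /\
  (irreducibleS F -> irreducibleS F' ->
   exists Theta : S -> S,
     (forall C, unitS C -> unitS (Theta C)) /\
     (forall C1 C2, unitS C1 -> unitS C2 -> Theta C1 = Theta C2 -> C1 = C2) /\
     (forall C', unitS C' -> exists C, unitS C /\ Theta C = C') /\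
     (forall C, unitS C -> forall es es' : seq nat,
        factorization (F - C) es -> factorization (F' - Theta C) es' ->
        size es = size es' /\
        (forall i, (1 <= i <= size es)%N -> nth 0%N es i.-1 = nth 0%N es' i.-1))).
Proof.
split.
  move=> es es' h h'; exact: (part1 hS hF0 hF'0 hD hDU h h').
move=> hF hF'; exact: (part2 hS hF hF' hD hDU).
Qed.
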